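(* Let $\kappa$ be an infinite cardinal. The map $g\colon\mathcal{F}(\kappa)\times\mathcal{F}(\kappa)\to M_3[\mathcal{F}(\kappa)]$, $g(A,C)=(A,\,A\cap C,\,C)$, is a bounded lattice embedding. In particular, the range of $g$ is a bounded Boolean sublattice of $M_3[\mathcal{F}(\kappa)]$ isomorphic to $\mathcal{F}(\kappa)\times\mathcal{F}(\kappa)$.
   Context: $\mathcal{F}(\kappa)$ is the Boolean lattice of subsets $X\subseteq\kappa$ that are finite or cofinite. For sets $A,B,C$, $\mu(A,B,C)=(A\cap B)\cup(A\cap C)\cup(B\cap C)$. A triple is balanced if $A\cap B=A\cap C=B\cap C$; $M_3[\mathcal{F}(\kappa)]$ is the set of balanced triples in $\mathcal{F}(\kappa)^3$, a lattice under the componentwise order with componentwise intersection as meet and join $(A,B,C)\vee(A',B',C')=(U_1\cup m,U_2\cup m,U_3\cup m)$ where $U_1=A\cup A'$, $U_2=B\cup B'$, $U_3=C\cup C'$, $m=\mu(U_1,U_2,U_3)$; its bounds are $(\emptyset,\emptyset,\emptyset)$ and $(\kappa,\kappa,\kappa)$. *)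

(* Defs.v *)
From HB Require Import structures.
From mathcomp Require Import all_boot.
From mathcomp Require Import boolp classical_sets cardinality.
Set Implicit Arguments. Unset Strict Implicit. Unset Printing Implicit Defensive.
Local Open Scope classical_set_scope.

(* The cardinal kappa is represented by a type T; "kappa infinite" is
   ~ finite_set [set: T]. *)

(* Membership in F(kappa): finite or cofinite subsets of T. *)
Definition FC (T : Type) (X : set T) : Prop :=
  finite_set X \/ finite_set (~` X).

Definition mu (T : Type) (A B C : set T) : set T :=
  (A `&` B) `|` (A `&` C) `|` (B `&` C).

Definition triple (T : Type) := (set T * set T * set T)%type.

Definition balanced (T : Type) (t : triple T) : Prop :=
  let: (A, B, C) := t in A `&` B = A `&` C /\ A `&` C = B `&` C.

Definition M3 (T : Type) (t : triple T) : Prop :=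
  let: (A, B, C) := t in [/\ FC A, FC B, FC C & balanced t].

Definition m3meet (T : Type) (t t' : triple T) : triple T :=
  let: (A, B, C) := t in let: (A', B', C') := t' in
  (A `&` A', B `&` B', C `&` C').

Definition m3join (T : Type) (t t' : triple T) : triple T :=
  let: (A, B, C) := t in let: (A', B', C') := t' in
  let U1 := A `|` A' in let U2 := B `|` B' in let U3 := C `|` C' in
  let m := mu U1 U2 U3 in (U1 `|` m, U2 `|` m, U3 `|` m).

Definition m3bot (T : Type) : triple T := (set0, set0, set0).
Definition m3top (T : Type) : triple T := (setT, setT, setT).

Definition g (T : Type) (A C : set T) : triple T := (A, A `&` C, C).

(* Main.v *)
Require Import Defs.
From mathcomp Require Import all_boot.
From mathcomp Require Import boolp classical_sets cardinality.
Local Open Scope classical_set_scope.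

Ltac seteq := apply/predeqP => x; rewrite /setI /setU /setC /set0 /setT /mkset /=; tauto.

Lemma FCI (T : Type) (A C : set T) : FC A -> FC C -> FC (A `&` C).
Proof.
case=> [fA|fA]; first by move=> _; left; apply: (sub_finite_set _ fA) => x [].
case=> [fC|fC]; first by left; apply: (sub_finite_set _ fC) => x [].
by right; rewrite setCI finite_setU.
Qed.

Lemma FCC (T : Type) (A : set T) : FC A -> FC (~` A).
Proof. by rewrite /FC setCK; case; [right|left]. Qed.

Theorem lemma5p1 (T : Type) (Tinf : ~ finite_set [set: T]) :
  (* g maps F(kappa) x F(kappa) into M_3[F(kappa)] *)
  (forall A C : set T, FC A -> FC C -> M3 (g A C)) /\
  (* g preserves meets (product order on F x F is componentwise) *)
  (forall A C A' C' : set T, FC A -> FC C -> FC A' -> FC C' ->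
     g (A `&` A') (C `&` C') = m3meet (g A C) (g A' C')) /\
  (* g preserves joins *)
  (forall A C A' C' : set T, FC A -> FC C -> FC A' -> FC C' ->
     g (A `|` A') (C `|` C') = m3join (g A C) (g A' C')) /\
  (* g preserves the bounds *)
  g set0 set0 = @m3bot T /\ g setT setT = @m3top T /\
  (* g is injective *)
  (forall A C A' C' : set T, FC A -> FC C -> FC A' -> FC C' ->
     g A C = g A' C' -> A = A' /\ C = C') /\
  (* the range of g is a Boolean sublattice: complements exist inside it *)
  (forall A C : set T, FC A -> FC C ->
     exists A' C' : set T, FC A' /\ FC C' /\
       m3meet (g A C) (g A' C') = @m3bot T /\
       m3join (g A C) (g A' C') = @m3top T).
Proof.
split.
  move=> A C hA hC; rewrite /M3 /g /balanced; split => //; first exact: FCI.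
  by split; seteq.
split.
  move=> A C A' C' _ _ _ _; rewrite /g /m3meet; congr (_,_,_); seteq.
split.
  move=> A C A' C' _ _ _ _; rewrite /g /m3join /mu; congr (_,_,_); seteq.
split; first by rewrite /g /m3bot; congr (_,_,_); seteq.
split; first by rewrite /g /m3top; congr (_,_,_); seteq.
split; first by move=> A C A' C' _ _ _ _ [-> _ ->].
move=> A C hA hC; exists (~` A), (~` C); split; first exact: FCC.
split; first exact: FCC.
split.
  rewrite /g /m3meet /m3bot; congr (_,_,_); seteq.
rewrite /g /m3join /m3top /mu; congr (_,_,_); apply/predeqP => x;
  rewrite /setI /setU /setC /set0 /setT /mkset /=; split=> // _;
  case: (pselect (A x)); case: (pselect (C x)); tauto.
Qed.
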